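(* Let $r>1$ be real and let $d$ be a positive integer with $1\le d\le r-1$. Then $\sum_{n=d+1}^\infty n^{-r}<d^{-r}$. *)

(* Defs.v *)
From Stdlib Require Import Reals.
From Coquelicot Require Import Coquelicot.

(* Main.v *)
Require Import Defs.
From Stdlib Require Import Reals Lra Lia.
From Coquelicot Require Import Coquelicot.
Open Scope R_scope.
Lemma key (m s : R) : 1 < m -> 0 < s ->
  Rpower m (-(s+1)) < (Rpower (m-1) (-s) - Rpower m (-s))/s.
Proof.
  intros Hm Hs. unfold Rpower.
  set (L := ln m). set (L' := ln (m-1)).
  assert (HX : 1/m < L - L').
  { assert (H1 : 1 - 1/m < exp (-(1/m))).
    { apply exp_ineq1. assert (0 < 1/m) by (apply Rdiv_lt_0_compat; lra). lra. }
    assert (H2: ln (1 - 1/m) < -(1/m)).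
    { rewrite <- (ln_exp (-(1/m))). apply ln_increasing; auto.
      assert (1/m < 1) by (apply Rmult_lt_reg_r with m; [lra| unfold Rdiv; rewrite Rmult_assoc, Rinv_l; lra]). lra. }
    replace (1 - 1/m) with ((m-1)/m) in H2 by (field; lra).
    rewrite ln_div in H2 by lra. unfold L, L'. lra. }
  assert (HE : exp (-(s+1) * L) = exp (-s*L) / m).
  { replace (-(s+1)*L) with (-s*L + - L) by ring. rewrite exp_plus, exp_Ropp.
    unfold L. rewrite exp_ln by lra. reflexivity. }
  assert (HE' : exp (-s * L') = exp (-s*L) * exp (s * (L - L'))).
  { rewrite <- exp_plus. f_equal; ring. }
  rewrite HE, HE'.
  assert (Hx : 1 + s * (L - L') < exp (s * (L-L'))).
  { apply exp_ineq1. assert (0 < 1/m) by (apply Rdiv_lt_0_compat; lra). nra. }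
  assert (Hsm : s / m < s * (L-L')).
  { unfold Rdiv. rewrite <- (Rmult_1_r (s * / m)), Rmult_assoc. apply Rmult_lt_compat_l; [lra|]. unfold Rdiv in HX. lra. }
  set (E := exp (-s*L)). assert (0 < E) by apply exp_pos.
  set (Y := exp (s * (L-L'))) in *.
  apply Rmult_lt_reg_r with s; [lra|].
  replace ((E * Y - E)/s * s) with (E * (Y - 1)) by (field; lra).
  replace (E / m * s) with (E * (s/m)) by (field; lra).
  apply Rmult_lt_compat_l; lra.
Qed.
Theorem mainTheorem12 (r : R) (d : nat) (hr : 1 < r) (hd1 : (1 <= d)%nat)
  (hdr : INR d <= r - 1) :
  ex_series (fun k : nat => Rpower (INR (k + d + 1)) (- r)) /\
  Series (fun k : nat => Rpower (INR (k + d + 1)) (- r)) < Rpower (INR d) (- r).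
Proof.
  set (s := r - 1).
  set (a := fun k : nat => Rpower (INR (k + d + 1)) (- r)).
  set (g := fun k : nat => Rpower (INR (k + d)) (- s) / s).
  assert (Hs : 0 < s) by (unfold s; lra).
  assert (Hd : 1 <= INR d) by (apply (le_INR 1); lia).
  assert (Hkey : forall k, a k < g k - g (S k)).
  { intro k. unfold a, g.
    replace (k + d + 1)%nat with (S (k+d)) by lia; rewrite S_INR.
    replace (S k + d)%nat with (S (k+d)) by lia; rewrite S_INR.
    replace (- r) with (-(s+1)) by (unfold s; ring).
    assert (1 <= INR (k+d)) by (apply (le_INR 1); lia).
    replace (Rpower (INR (k + d)) (- s) / s - Rpower (INR (k + d) + 1) (- s) / s)
      with ((Rpower (INR (k + d) + 1 - 1) (- s) - Rpower (INR (k + d) + 1) (- s))/s)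
      by (replace (INR (k + d) + 1 - 1) with (INR (k+d)) by ring; field; lra).
    apply key; lra. }
  assert (Hg : forall k, 0 <= g k).
  { intro k. unfold g, Rpower. apply Rlt_le, Rdiv_lt_0_compat; [apply exp_pos|lra]. }
  assert (Ha : forall k, 0 <= a k).
  { intro k. unfold a, Rpower. apply Rlt_le, exp_pos. }
  set (delta := g 0%nat - g 1%nat - a 0%nat).
  assert (Hdel : 0 < delta) by (unfold delta; specialize (Hkey 0%nat); lra).
  assert (Hpart : forall N, sum_n a N <= g 0%nat - g (S N) - delta).
  { induction N.
    - rewrite sum_O. unfold delta. lra.
    - rewrite sum_Sn. specialize (Hkey (S N)). unfold plus; simpl. lra. }
  assert (Hbound : forall N, sum_n a N <= g 0%nat - delta).
  { intro N. specialize (Hpart N). specialize (Hg (S N)). lra. }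
  assert (Hex : ex_series a).
  { destruct (ex_finite_lim_seq_incr (sum_n a) (g 0%nat - delta)) as [l Hl].
    - intro n. rewrite sum_Sn. unfold plus; simpl. specialize (Ha (S n)). lra.
    - exact Hbound.
    - exists l. exact Hl. }
  split; [exact Hex|].
  assert (HS : Series a <= g 0%nat - delta).
  { destruct Hex as [l Hl]. rewrite (is_series_unique a l Hl).
    assert (H := is_lim_seq_le (sum_n a) (fun _ => g 0%nat - delta) l (g 0%nat - delta)
                 Hbound Hl (is_lim_seq_const _)). simpl in H. exact H. }
  assert (Hg0 : g 0%nat <= Rpower (INR d) (- r)).
  { unfold g. simpl.
    replace (- s) with (1 + - r) by (unfold s; ring).
    rewrite Rpower_plus, Rpower_1 by lra.
    assert (0 < Rpower (INR d) (- r)) by (unfold Rpower; apply exp_pos).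
    apply Rmult_le_reg_r with s; [lra|].
    replace (INR d * Rpower (INR d) (- r) / s * s) with (INR d * Rpower (INR d) (- r)) by (field; lra).
    rewrite Rmult_comm. apply Rmult_le_compat_l; unfold s in *; lra. }
  lra.
Qed.
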